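(* Let $E$ be a holomorphic rank-$3$ vector bundle on $\mathbb P_2^*$ which is a sufficiently small deformation of $E_0=\mathrm{End}_0T_{\mathbb P_2^*}$, as in the context. Then the map $f:\mathbb P(E)\to\mathbb P(H^0(\mathbb P(E),H(1))^* )$ given by the linear system of $H(1)$ has image contained in the intersection of the cubic determinantal hypersurface $\{\det X=0\}\subset\mathbb P(\mathrm{Hom}(H^0(\mathbb P_2^*,\Omega^1(2)),\mathbb C^3))$ with the linear subspace $\mathbb P(H^0(\mathbb P(E),H(1))^* )$.
   Context: $\mathbb P(E)$ is the projective bundle of lines in $E$, $H$ the dual of its tautological line bundle, $\mathcal O(1)$ the hyperplane bundle of $\mathbb P_2^*$, so $H^0(\mathbb P(E),H(1))\cong H^0(\mathbb P_2^*,E^*(1))$, of dimension $6$ for $E$ close to $E_0$. For such $E$, $E^*$ is the cokernel of an injective bundle map $\mathbb C^3\otimes\mathcal O(-1)\to\mathbb C^3\otimes\Omega^1(1)$ (the Beilinson monad, with $\mathbb C^3=H^1(E^*(-2))$ and $H^1(E^*(-1))$, each $3$-dimensional), given by a $3\times3$ matrix with entries in $H^0(\mathbb P_2^*,\Omega^1(2))$ (a $3$-dimensional space with basis $x_2dx_3-x_3dx_2$, etc.). Twisting by $\mathcal O(1)$ gives a surjection $\mathbb C^3\otimes H^0(\Omega^1(2))\to H^0(E^*(1))$, whose dual embeds $\mathbb P(H^0(E^*(1))^* )\cong\mathbb P^5$ linearly into the $8$-dimensional projective space of $3\times3$ matrices $X$, identified with $\mathbb P(\mathrm{Hom}(H^0(\Omega^1(2)),\mathbb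 C^3))$; the determinantal hypersurface consists of the singular homomorphisms. *)

(* Defs.v *)
(* Concrete coordinate model of the Beilinson-monad
   description of E^* on P_2^* and of the map f : P(E) -> P(H^0(H(1))^* ). *)
From HB Require Import structures.
From mathcomp Require Import all_boot all_order all_algebra.
Set Implicit Arguments. Unset Strict Implicit. Unset Printing Implicit Defensive.
Import Order.TTheory GRing.Theory Num.Theory.
Local Open Scope ring_scope.

Section Model.
Variable C : numClosedFieldType.

Definition isucc (k : 'I_3) : 'I_3 := inord ((k + 1) %% 3)%N.
Definition isucc2 (k : 'I_3) : 'I_3 := inord ((k + 2) %% 3)%N.

(* A point of P_2^* is a nonzero x : 'rV_3 (homogeneous coordinates).
   The fibre of Omega^1(2) at x is identified, via the Euler sequence, with
   the covectors w (coefficients of dx_0,dx_1,dx_2) with sum_j w_j x_j = 0.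
   omega k x = value at x of the k-th basis section of H^0(Omega^1(2)):
     omega 0 = x_1 dx_2 - x_2 dx_1, omega 1 = x_2 dx_0 - x_0 dx_2,
     omega 2 = x_0 dx_1 - x_1 dx_0   (0-based version of x_2dx_3-x_3dx_2, ...). *)
Definition omega (k : 'I_3) (x : 'rV[C]_3) : 'rV[C]_3 :=
  \row_j (if j == isucc k then - x 0 (isucc2 k)
          else if j == isucc2 k then x 0 (isucc k) else 0).

(* Fibre of Omega^1(2) at x, tensored with C^3: 3x3 matrices T whose rows
   are covectors annihilating x (row i = the C^3-component e_i). *)
Definition in_fibre (x : 'rV[C]_3) (T : 'M[C]_3) : Prop := T *m x^T = 0.

(* Monad matrix: entry (i,j) = sum_k (A k) i j * omega_k, an element of
   H^0(Omega^1(2)).  Its value at x applied to u in C^3 (fibre of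
   C^3 (x) O(-1), twisted) is the element of C^3 (x) Omega^1(2)_x : *)
Definition monad_fibre (A : 'I_3 -> 'M[C]_3) (x u : 'rV[C]_3) : 'M[C]_3 :=
  \matrix_(i, c) \sum_(j < 3) \sum_(k < 3) A k i j * u 0 j * omega k x 0 c.

Definition monad_injective (A : 'I_3 -> 'M[C]_3) : Prop :=
  forall x u : 'rV[C]_3, x != 0 -> monad_fibre A x u = 0 -> u = 0.

Definition pairing (V T : 'M[C]_3) : C := \sum_(i < 3) \sum_(c < 3) V i c * T i c.

(* A point of P(E) over x: (a representative of) a nonzero functional on
   E^*(1)_x = coker (monad_fibre A x), i.e. a functional V on
   C^3 (x) Omega^1(2)_x that is nonzero there and kills the image. *)
Definition PE_point (A : 'I_3 -> 'M[C]_3) (x : 'rV[C]_3) (V : 'M[C]_3) : Prop :=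
  [/\ x != 0,
      exists T, in_fibre x T /\ pairing V T != 0
    & forall u, pairing V (monad_fibre A x u) = 0].

(* Image of that point under f, viewed through the dual of the surjection
   C^3 (x) H^0(Omega^1(2)) -> H^0(E^*(1)) as a 3x3 matrix X
   (X i k = value of the functional on e_i (x) omega_k). *)
Definition fmap (x : 'rV[C]_3) (V : 'M[C]_3) : 'M[C]_3 :=
  \matrix_(i, k) \sum_(c < 3) V i c * omega k x 0 c.

(* The linear subspace P(H^0(E^*(1))^* ) inside P(3x3 matrices): the
   annihilator of the image of H^0(C^3 (x) O) = C^3 under the monad. *)
Definition in_linear_subspace (A : 'I_3 -> 'M[C]_3) (X : 'M[C]_3) : Prop :=
  forall u : 'rV[C]_3,
    \sum_(i < 3) \sum_(k < 3) X i k * (\sum_(j < 3) A k i j * u 0 j) = 0.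

End Model.

(* Main.v *)
Require Import Defs.
From HB Require Import structures.
From mathcomp Require Import all_boot all_order all_algebra.
From mathcomp Require Import ring.
Import Order.TTheory GRing.Theory Num.Theory.
Local Open Scope ring_scope.

Lemma sum3 (R : nmodType) (F : 'I_3 -> R) :
  \sum_(i < 3) F i = F (inord 0) + F (inord 1) + F (inord 2).
Proof.
rewrite !big_ord_recr big_ord0 /= add0r; congr (_ + _ + _); congr F; apply/val_inj;
  by rewrite /= inordK.
Qed.

Lemma omega_vals (C : numClosedFieldType) (x : 'rV[C]_3) :
  [/\ omega (inord 0) x 0 (inord 0) = 0, omega (inord 0) x 0 (inord 1) = - x 0 (inord 2),
      omega (inord 0) x 0 (inord 2) = x 0 (inord 1),
      omega (inord 1) x 0 (inord 0) = x 0 (inord 2) &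
   [/\ omega (inord 1) x 0 (inord 1) = 0, omega (inord 1) x 0 (inord 2) = - x 0 (inord 0),
      omega (inord 2) x 0 (inord 0) = - x 0 (inord 1),
      omega (inord 2) x 0 (inord 1) = x 0 (inord 0) &
      omega (inord 2) x 0 (inord 2) = 0]].
Proof.
have E : forall a b : nat, (a < 3)%N -> (b < 3)%N ->
   ((inord a : 'I_3) == inord b) = (a == b).
  by move=> a b ha hb; rewrite -val_eqE /= !inordK.
have S : forall a : nat, (a < 3)%N -> isucc (inord a) = inord ((a + 1) %% 3)
  by move=> a ha; rewrite /isucc inordK.
have S2 : forall a : nat, (a < 3)%N -> isucc2 (inord a) = inord ((a + 2) %% 3)
  by move=> a ha; rewrite /isucc2 inordK.
rewrite /omega !mxE !S // !S2 //= !E //.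
Qed.

Lemma eq_from (C : numClosedFieldType) (a b c : C) : c = 0 -> a - b = c -> a = b.
Proof. by move=> -> /eqP; rewrite subr_eq0 => /eqP. Qed.
Arguments eq_from {C a b c}.
Lemma eq_fromN (C : numClosedFieldType) (a b c : C) : c = 0 -> b - a = c -> a = b.
Proof. by move=> h1 h2; symmetry; exact: (eq_from h1 h2). Qed.
Arguments eq_fromN {C a b c}.

Lemma key3 (C : numClosedFieldType) (x v t : 'I_3 -> C) (m : 'I_3) :
  (forall a b, x a * v b = x b * v a) -> \sum_b t b * x b = 0 ->
  x m * \sum_b v b * t b = 0.
Proof.
move=> H Ht; rewrite mulr_sumr.
transitivity (v m * \sum_b t b * x b); last by rewrite Ht mulr0.
rewrite mulr_sumr; apply: eq_bigr => b _; rewrite mulrA H; ring.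
Qed.

Arguments key3 {C}.

Lemma crossK (C : numClosedFieldType) (x v : 'I_3 -> C) :
  v (inord 0) * 0 + v (inord 1) * - x (inord 2) + v (inord 2) * x (inord 1) = 0 ->
  v (inord 0) * x (inord 2) + v (inord 1) * 0 + v (inord 2) * - x (inord 0) = 0 ->
  v (inord 0) * - x (inord 1) + v (inord 1) * x (inord 0) + v (inord 2) * 0 = 0 ->
  forall a b, x a * v b = x b * v a.
Proof.
move=> h0 h1 h2.
have K : forall a b : 'I_3, (a <= b)%N -> x a * v b = x b * v a.
  move=> a b; have -> : a = inord a by apply/val_inj; rewrite /= inordK.
  have -> : b = inord b by apply/val_inj; rewrite /= inordK.
  case: a => [[|[|[|a]]] ha] //; case: b => [[|[|[|b]]] hb] //= _;
    move: h0 h1 h2; move: (x (inord 0)) (x (inord 1)) (x (inord 2))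
      (v (inord 0)) (v (inord 1)) (v (inord 2)) => x0 x1 x2 v0 v1 v2 h0 h1 h2;
    first [ reflexivity | apply: (eq_from h0); ring
          | apply: (eq_from h1); ring | apply: (eq_from h2); ring
          | apply: (eq_fromN h0); ring
          | apply: (eq_fromN h1); ring | apply: (eq_fromN h2); ring ].
move=> a b; case: (leqP a b) => hab; first exact: K.
by symmetry; apply: K; apply: ltnW.
Qed.

Arguments crossK {C}.

Theorem proposition10 (C : numClosedFieldType) (A : 'I_3 -> 'M[C]_3)
  (hA : monad_injective A) (x : 'rV[C]_3) (V : 'M[C]_3)
  (hp : PE_point A x V) :
  fmap x V != 0 /\ in_linear_subspace A (fmap x V) /\ \det (fmap x V) = 0.
Proof.
case: hp => hx [T [hT hVT]] hV.
have [o00 o01 o02 o10 [o11 o12 o20 o21 o22]] := omega_vals _ x.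
split; [|split].
- apply/negP => /eqP X0; move/negP: hVT; apply.
  have [m hm] : exists m, x 0 m != 0.
    apply/existsP; apply: contraR hx => /existsPn H; apply/eqP/rowP => j.
    by rewrite mxE; apply/eqP; move: (H j); rewrite negbK.
  rewrite -(mulrI_eq0 _ (lregP hm)) /pairing mulr_sumr; apply/eqP/big1 => i _.
  have hX : forall k, \sum_(c < 3) V i c * omega k x 0 c = 0.
    by move=> k; move/matrixP: X0 => /(_ i k); rewrite !mxE.
  have h0 := hX (inord 0); have h1 := hX (inord 1); have h2 := hX (inord 2).
  rewrite !sum3 in h0 h1 h2.
  rewrite o00 o01 o02 in h0; rewrite o10 o11 o12 in h1; rewrite o20 o21 o22 in h2.
  apply: (key3 (fun j => x 0 j) (V i) (T i) m).
  + exact: (crossK (fun j => x 0 j) (V i) h0 h1 h2).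
  + move/matrixP: hT => /(_ i 0); rewrite !mxE => H; rewrite -{}[RHS]H.
    by apply: eq_bigr => j _; rewrite mxE.
- move=> u; rewrite -[RHS](hV u) /pairing /monad_fibre /fmap.
  rewrite !sum3 !mxE ?sum3 ?mxE ?sum3 ?mxE ?sum3; ring.
- have -> : fmap x V = V *m \matrix_(c, k) omega k x 0 c.
    apply/matrixP => i k; rewrite !mxE. apply: eq_bigr => c _. by rewrite [in RHS]mxE.
  rewrite det_mulmx; apply/eqP; rewrite mulf_eq0; apply/orP; right.
  have WE : forall c k, (\matrix_(c, k) omega k x 0 c) c k = omega k x 0 c.
    by move=> c k; rewrite [in LHS]mxE.
  apply/det0P; exists x => //; apply/rowP => k; rewrite [RHS]mxE mxE sum3 !WE.
  have -> : k = inord k by apply/val_inj; rewrite /= inordK.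
  case: k => [[|[|[|k]]] hk] //=;
    rewrite ?o00 ?o01 ?o02 ?o10 ?o11 ?o12 ?o20 ?o21 ?o22; ring.
Qed.
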